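(* A numerical semigroup $S$ has a cyclotomic exponent sequence with only finitely many nonzero terms if and only if $S$ is a cyclotomic numerical semigroup.
   Context: A numerical semigroup is a submonoid $S$ of $(\mathbb N,+)$ with $\mathbb N\setminus S$ finite; $\mathrm P_S(x)=(1-x)\sum_{s\in S}x^s$ is its semigroup polynomial (a polynomial with constant term $1$). There are unique integers $e_1,e_2,\ldots$ such that $\mathrm P_S(x)=\prod_{j=1}^\infty(1-x^j)^{e_j}$ as formal power series; the sequence $(e_1,e_2,\ldots)$ is the cyclotomic exponent sequence of $S$. $S$ is cyclotomic if $\mathrm P_S$ has all complex roots in the closed unit disc. *)

(* Defs.v *)
From mathcomp Require Import all_boot all_order all_algebra all_field.
Set Implicit Arguments. Unset Strict Implicit. Unset Printing Implicit Defensive.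
Import Order.TTheory GRing.Theory Num.Theory.
Local Open Scope ring_scope.

Definition numerical_semigroup (S : pred nat) : Prop :=
  [/\ S 0%N,
      (forall a b, S a -> S b -> S (a + b)%N) &
      exists N : nat, forall n, (N <= n)%N -> S n].

Definition gap_bound (S : pred nat) (N : nat) : Prop :=
  forall n, (N <= n)%N -> S n.

(* P_S(x) = (1 - x) * sum_{s in S} x^s, computed with any gap bound N:
   sum_{s in S} x^s = sum_{s < N, s in S} x^s + x^N/(1-x). *)
Definition semigroup_poly (S : pred nat) (N : nat) : {poly int} :=
  (1 - 'X) * (\sum_(i < N | S i) 'X^i) + 'X^N.

(* Coefficient i of the power series (1 - x) * sum_{s in S} x^s. *)
Definition semigroup_coef (S : pred nat) (i : nat) : int :=
  (S i)%:Z - ((0 < i)%N && S i.-1)%:Z.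

Definition geom_trunc (j n : nat) : {poly int} :=
  \sum_(k < n.+1) 'X^(j * k).

(* (1 - x^j)^e, as a power series correct through degree n
   (for negative e, uses the truncated inverse series). *)
Definition cyc_factor (j : nat) (e : int) (n : nat) : {poly int} :=
  match e with
  | Posz m => (1 - 'X^j) ^+ m
  | Negz m => (geom_trunc j n) ^+ m.+1
  end.

(* e (with e j for j >= 1; e 0 is irrelevant) is the cyclotomic exponent
   sequence of S: P_S(x) = prod_{j>=1} (1 - x^j)^{e_j} as formal power series,
   i.e. the coefficients agree in every degree i <= n, where only the factors
   with j <= n can contribute to such coefficients. *)
Definition cyclotomic_exponent_seq (S : pred nat) (e : nat -> int) : Prop :=
  forall n i, (i <= n)%N ->
    semigroup_coef S i = (\prod_(1 <= j < n.+1) cyc_factor j (e j) n)`_i.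

Definition cyclotomic_semigroup (S : pred nat) : Prop :=
  forall N, gap_bound S N ->
    forall z : algC, root (map_poly (intr : int -> algC) (semigroup_poly S N)) z ->
      `|z| <= 1.

(* Main.v *)
Require Import Defs.
From mathcomp Require Import all_boot all_order all_algebra all_field.
From mathcomp Require Import ring zify.
Set Implicit Arguments. Unset Strict Implicit. Unset Printing Implicit Defensive.
Import Order.TTheory GRing.Theory Num.Theory.
Local Open Scope ring_scope.

Definition cong n (p q : {poly int}) := exists r, p - q = r * 'X^(n.+1).

Lemma cong_refl n (p : {poly int}) : cong n p p.
Proof. by exists 0; rewrite subrr mul0r. Qed.

Lemma cong_sym n (p q : {poly int}) : cong n p q -> cong n q p.
Proof. by case=> r e; exists (- r); rewrite mulNr -e opprB. Qed.

Lemma cong_trans n (p q s : {poly int}) : cong n p q -> cong n q s -> cong n p s.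
Proof.
case=> r1 e1 [r2 e2]; exists (r1 + r2).
by rewrite mulrDl -e1 -e2; ring.
Qed.

Lemma congM n (p q p' q' : {poly int}) : cong n p p' -> cong n q q' -> cong n (p * q) (p' * q').
Proof.
case=> r1 e1 [r2 e2]; exists (r1 * q + p' * r2).
have -> : p * q - p' * q' = (p - p') * q + p' * (q - q') by ring.
by rewrite e1 e2; ring.
Qed.

Lemma congX n (p q : {poly int}) k : cong n p q -> cong n (p ^+ k) (q ^+ k).
Proof.
move=> h; elim: k => [|k IH]; first by rewrite !expr0; exact: cong_refl.
by rewrite !exprS; apply: congM.
Qed.

Lemma cong_prod n (I : eqType) (r : seq I) (P : pred I) (F G : I -> {poly int}) :
  (forall i, i \in r -> P i -> cong n (F i) (G i)) ->
  cong n (\prod_(i <- r | P i) F i) (\prod_(i <- r | P i) G i).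
Proof.
elim: r => [|x r IH] h; first by rewrite !big_nil; exact: cong_refl.
have h' : forall i, i \in r -> P i -> cong n (F i) (G i).
  by move=> i ir; apply: h; rewrite inE ir orbT.
rewrite !big_cons; case: ifP => Px; last exact: IH.
by apply: congM; [apply: h => //; exact: mem_head | exact: IH].
Qed.

Lemma cong_coef n (p q : {poly int}) i : cong n p q -> (i <= n)%N -> p`_i = q`_i.
Proof.
case=> r e le; apply/eqP; rewrite -subr_eq0 -coefB e coefMXn.
by rewrite ltnS le.
Qed.

Lemma coef_cong n (p q : {poly int}) : (forall i, (i <= n)%N -> p`_i = q`_i) -> cong n p q.
Proof.
move=> h; exists (drop_poly n.+1 (p - q)).
have t0 : take_poly n.+1 (p - q) = 0.
  apply/polyP => i; rewrite coef_take_poly coef0 coefB.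
  by case: ltnP => // hi; rewrite h ?subrr.
by rewrite -{1}(poly_take_drop n.+1 (p - q)) t0 add0r.
Qed.

Lemma cong_eq n (p q : {poly int}) : cong n p q -> (size p <= n.+1)%N -> (size q <= n.+1)%N -> p = q.
Proof.
move=> c sp sq; apply/polyP => i.
have [le|lt] := leqP i n; first exact: cong_coef c le.
by rewrite !nth_default // (leq_trans _ lt).
Qed.

Lemma geom_telescope j m :
  (1 - 'X^j) * \sum_(k < m) 'X^(j * k) = 1 - 'X^(j * m) :> {poly int}.
Proof.
elim: m => [|m IH]; first by rewrite big_ord0 mulr0 muln0 expr0 subrr.
by rewrite big_ord_recr /= mulrDr IH mulnS exprD; ring.
Qed.

Lemma cong_X n j : (n < j)%N -> cong n (1 - 'X^j) 1.
Proof.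
move=> lt; exists (- 'X^(j - n.+1)).
by rewrite mulNr -exprD subnK //; ring.
Qed.

Lemma cong_geom n j : (0 < j)%N -> cong n ((1 - 'X^j) * geom_trunc j n) 1.
Proof.
move=> j0; rewrite /geom_trunc geom_telescope; apply: cong_X.
by rewrite mulnS; have := leq_pmull n j0; lia.
Qed.

Lemma congX1 n (p : {poly int}) k : cong n p 1 -> cong n (p ^+ k) 1.
Proof. by move=> h; have := congX k h; rewrite expr1n. Qed.

Definition negf (e : int) : nat := match e with Posz _ => 0%N | Negz m => m.+1 end.
Definition posf (e : int) : nat := match e with Posz m => m | Negz _ => 0%N end.

Lemma cyc_fwd n j e : (0 < j)%N ->
  cong n (cyc_factor j e n * (1 - 'X^j) ^+ negf e) ((1 - 'X^j) ^+ posf e).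
Proof.
move=> j0; case: e => m /=; first by rewrite expr0 mulr1; exact: cong_refl.
rewrite mulrC -exprMn expr0; apply: congX1; exact: cong_geom.
Qed.

Lemma cyc_bwd n j (a b : nat) : (0 < j)%N ->
  cong n (cyc_factor j (b%:Z - a%:Z) n) ((1 - 'X^j) ^+ b * (geom_trunc j n) ^+ a).
Proof.
move=> j0; have hQG := cong_geom n j0.
have h1 k : cong n 1 (((1 - 'X^j) * geom_trunc j n) ^+ k).
  by apply: cong_sym; apply: congX1.
case: (leqP a b) => ab.
  rewrite subzn //=.
  have -> : (1 - 'X^j) ^+ b * geom_trunc j n ^+ a =
      (1 - 'X^j) ^+ (b - a) * ((1 - 'X^j) * geom_trunc j n) ^+ a.
    by rewrite exprMn mulrA -exprD subnK.
  rewrite -[X in cong n X _]mulr1; apply: congM (cong_refl _ _) (h1 _).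
have -> : b%:Z - a%:Z = Negz (a - b).-1.
  by rewrite NegzE prednK ?subn_gt0 // -subzn ?(ltnW ab) // opprB.
rewrite /= prednK ?subn_gt0 //.
have -> : (1 - 'X^j) ^+ b * geom_trunc j n ^+ a =
    geom_trunc j n ^+ (a - b) * ((1 - 'X^j) * geom_trunc j n) ^+ b.
  by rewrite exprMn mulrCA -exprD subnK // ltnW.
rewrite -[X in cong n X _]mulr1; apply: congM (cong_refl _ _) (h1 _).
Qed.

Lemma seq_cong n (a : seq nat) : all (fun j => 0 < j)%N a ->
  cong n (\prod_(j <- a) (1 - 'X^j))
         (\prod_(1 <= j < n.+1) (1 - 'X^j) ^+ (count_mem j a)).
Proof.
elim: a => [|x a IH] /=.
  move=> _; rewrite big_nil big1 => [|j _]; [exact: cong_refl | by rewrite expr0].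
case/andP => x0 ha; rewrite big_cons.
rewrite [X in cong _ _ X](eq_bigr (fun j => (1 - 'X^j) ^+ (x == j) * (1 - 'X^j) ^+ count_mem j a)); last by move=> j _; rewrite exprD.
rewrite big_split /=; apply: congM (IH ha).
have [xn|nx] := leqP x n.
  rewrite (bigD1_seq x) /= ?mem_index_iota ?x0 ?ltnS ?iota_uniq // eqxx expr1.
  rewrite big1 ?mulr1 => [|j jx]; first exact: cong_refl.
  by rewrite eq_sym (negbTE jx) expr0.
rewrite big1_seq => [|j /andP[_]]; first exact: cong_X.
rewrite mem_index_iota => /andP[_ jn].
by rewrite gtn_eqF ?expr0 // (leq_trans jn nx).
Qed.

Lemma sig_coef (S : pred nat) N i :
  (\sum_(k < N | S k) 'X^k : {poly int})`_i = ((i < N)%N && S i)%:R.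
Proof.
rewrite coef_sum; under eq_bigr do rewrite coefXn.
case: (boolP ((i < N)%N && S i)) => [/andP[iN Si] | h].
  rewrite (bigD1 (Ordinal iN)) //= eqxx big1 ?addr0 // => k /andP[_ kn].
  case: eqP => // e; case/eqP: kn; apply: val_inj; by rewrite /= e.
rewrite big1 // => k Sk; case: eqP => // e.
by move: h; rewrite e ltn_ord Sk.
Qed.

Lemma sp_coef (S : pred nat) N i : gap_bound S N ->
  (semigroup_poly S N)`_i = semigroup_coef S i.
Proof.
move=> gb; rewrite /semigroup_poly /semigroup_coef mulrBl mul1r coefD coefB coefXM.
rewrite !sig_coef coefXn.
case: i => [|i] /=.
  case: N gb => [|N] gb /=.
    by rewrite (gb 0%N).
  by case: (S 0%N).
have [iN|iN|iN] := ltngtP i.+1 N.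
  by case: (S i.+1); case: (S i).
  by rewrite (gb i.+1) ?(gb i) //; lia.
by rewrite (gb i.+1) ?iN //; case: (S i).
Qed.

Lemma fwd (S : pred nat) (e : nat -> int) M N : gap_bound S N ->
  cyclotomic_exponent_seq S e -> (forall j, (M < j)%N -> e j = 0) ->
  semigroup_poly S N * \prod_(1 <= j < M.+1) (1 - 'X^j) ^+ negf (e j) =
  \prod_(1 <= j < M.+1) (1 - 'X^j) ^+ posf (e j).
Proof.
move=> gb ce hM.
set P := semigroup_poly S N.
set A := \prod_(1 <= j < M.+1) _. set B := \prod_(1 <= j < M.+1) _.
pose n := maxn M (size (P * A) + size B).
have ext (F : nat -> {poly int}) : (forall j, (M < j)%N -> F j = 1) ->
    \prod_(1 <= j < n.+1) F j = \prod_(1 <= j < M.+1) F j.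
  move=> hF; symmetry.
  rewrite (@big_nat_widen _ _ _ _ M.+1 n.+1) ?ltnS ?leq_maxl // big_mkcond /=.
  apply: eq_bigr => j _; case: ifP => // /negbT; rewrite ltnS -ltnNge => /hF ->.
  done.
have c1 : cong n P (\prod_(1 <= j < n.+1) cyc_factor j (e j) n).
  by apply: coef_cong => i le; rewrite sp_coef //; exact: ce.
have c2 : cong n (\prod_(1 <= j < n.+1) cyc_factor j (e j) n *
                  \prod_(1 <= j < n.+1) (1 - 'X^j) ^+ negf (e j))
                 (\prod_(1 <= j < n.+1) (1 - 'X^j) ^+ posf (e j)).
  rewrite -big_split /=; apply: cong_prod => j.
  by rewrite mem_index_iota => /andP[j0 _] _; exact: cyc_fwd.
rewrite !ext in c2; try by move=> j /hM ->; rewrite /= expr0.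
apply: (@cong_eq n).
- rewrite ext in c1; last by move=> j /hM ->; rewrite /= expr0.
  exact: cong_trans (congM c1 (cong_refl _ A)) c2.
- apply: leq_trans (leqnSn _); apply: leq_trans (leq_maxr _ _); exact: leq_addr.
- apply: leq_trans (leqnSn _); apply: leq_trans (leq_maxr _ _); exact: leq_addl.
Qed.

Lemma bwd (S : pred nat) N (a b : seq nat) : gap_bound S N ->
  all (fun j => 0 < j)%N a -> all (fun j => 0 < j)%N b ->
  semigroup_poly S N * \prod_(j <- a) (1 - 'X^j) = \prod_(j <- b) (1 - 'X^j) ->
  cyclotomic_exponent_seq S (fun j => (count_mem j b)%:Z - (count_mem j a)%:Z).
Proof.
move=> gb ha hb E n i le; rewrite -(sp_coef i gb); apply: (cong_coef _ le).
have c1 : cong n (\prod_(1 <= j < n.+1)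
                    cyc_factor j ((count_mem j b)%:Z - (count_mem j a)%:Z) n)
  (\prod_(1 <= j < n.+1) (1 - 'X^j) ^+ count_mem j b *
   \prod_(1 <= j < n.+1) geom_trunc j n ^+ count_mem j a).
  rewrite -big_split; apply: cong_prod => j.
  by rewrite mem_index_iota => /andP[j0 _] _; exact: cyc_bwd.
have c2 : cong n 1 (\prod_(1 <= j < n.+1)
                      ((1 - 'X^j) * geom_trunc j n) ^+ count_mem j a).
  have := @cong_prod n _ (index_iota 1 n.+1) xpredT (fun _ => 1)
    (fun j => ((1 - 'X^j) * geom_trunc j n) ^+ count_mem j a).
  rewrite big1_eq; apply => j; rewrite mem_index_iota => /andP[j0 _] _.
  by apply: cong_sym; apply: congX1; exact: cong_geom.
have c3 := cong_sym (seq_cong n ha).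
have c4 := seq_cong n hb.
apply: (@cong_trans _ _ (semigroup_poly S N *
   (\prod_(1 <= j < n.+1) (1 - 'X^j) ^+ count_mem j a *
    \prod_(1 <= j < n.+1) geom_trunc j n ^+ count_mem j a))).
  rewrite -big_split /=.
  rewrite (eq_bigr (fun j => ((1 - 'X^j) * geom_trunc j n) ^+ count_mem j a)); last first.
    by move=> j _; rewrite exprMn.
  by rewrite -[X in cong n X _]mulr1; apply: congM (cong_refl _ _) c2.
apply: (@cong_trans _ _ (semigroup_poly S N *
   (\prod_(j <- a) (1 - 'X^j) *
    \prod_(1 <= j < n.+1) geom_trunc j n ^+ count_mem j a))).
  exact: congM (cong_refl _ _) (congM c3 (cong_refl _ _)).
rewrite mulrA E; exact: cong_trans (congM c4 (cong_refl _ _)) (cong_sym c1).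
Qed.

Lemma eig_powP (F : fieldType) n (A : 'M[F]_n.+1) (v : 'rV_n.+1) z k :
  v *m A = z *: v -> v *m A ^+ k = z ^+ k *: v.
Proof.
move=> vA; elim: k => [|k IH]; first by rewrite !expr0 mulmx1 scale1r.
by rewrite exprSr -mulmxE mulmxA IH -scalemxAl vA scalerA -exprSr.
Qed.

Lemma vec_prod (F : fieldType) n (s : seq 'M[F]_n.+1) (v : 'rV_n.+1) :
  v != 0 -> v *m \prod_(M <- s) M = 0 ->
  exists2 M, M \in s & exists2 w : 'rV_n.+1, w != 0 & w *m M = 0.
Proof.
elim: s v => [|M s IH] v vn0.
  by rewrite big_nil mulmx1 => v0; rewrite v0 eqxx in vn0.
rewrite big_cons -mulmxE mulmxA => h.
have [vM0|vMn0] := eqVneq (v *m M) 0.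
  by exists M; [exact: mem_head | exists v].
have [M' sM' ex] := IH _ vMn0 h.
by exists M' => //; rewrite inE sM' orbT.
Qed.

Lemma eig_pow_inv n (A : 'M[algC]_n.+1) k w : (0 < k)%N ->
  eigenvalue (A ^+ k) w -> exists2 u, eigenvalue A u & u ^+ k = w.
Proof.
move=> k0 /eigenvalueP [v vAw vn0].
have [r Dr] := closed_field_poly_normal ('X^k - w%:P : {poly algC}).
rewrite (monicP (monicXnsubC w k0)) scale1r in Dr.
have h: v *m \prod_(M <- [seq A - u%:M | u <- r]) M = 0.
  rewrite big_map.
  have ->: \prod_(u <- r) (A - u%:M) = horner_mx A ('X^k - w%:P).
    rewrite Dr rmorph_prod; apply: eq_bigr => u _.
    by rewrite rmorphB /= horner_mx_X horner_mx_C.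
  rewrite rmorphB /= rmorphXn /= horner_mx_X horner_mx_C mulmxBr vAw.
  by rewrite mul_mx_scalar subrr.
have [M /mapP [u ur ->] [x xn0 xM]] := vec_prod vn0 h.
exists u.
  apply/eigenvalueP; exists x => //.
  by move: xM; rewrite mulmxBr mul_mx_scalar => /eqP; rewrite subr_eq0 => /eqP.
have : root ('X^k - w%:P) u by rewrite Dr root_prod_XsubC.
by rewrite rootE !hornerE subr_eq0 => /eqP.
Qed.

Lemma coef_prod_bound (rs : seq algC) :
  (forall u, u \in rs -> `|u| <= 1) ->
  forall i, `|(\prod_(u <- rs) ('X - u%:P))`_i| <= 2 ^+ size rs.
Proof.
elim: rs => [|u rs IH] hu i /=.
  by rewrite big_nil coef1 expr0; case: (i == 0)%N; rewrite ?normr1 ?normr0.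
have IH' : forall i, `|(\prod_(u <- rs) ('X - u%:P))`_i| <= 2 ^+ size rs.
  by apply: IH => x xr; apply: hu; rewrite inE xr orbT.
have hu1 : `|u| <= 1 by apply: hu; exact: mem_head.
rewrite big_cons mulrBl coefB coefXM coefCM exprS.
apply: le_trans (ler_normB _ _) _.
rewrite mulr_natl mulr2n; apply: lerD.
  by case: ifP => _; [rewrite normr0 exprn_ge0 | exact: IH'].
rewrite normrM -[X in _ <= X]mul1r; apply: ler_pM => //.
Qed.

Lemma kron_mx n (A : 'M[int]_n) (z : algC) :
  (forall w : algC, root (map_poly intr (char_poly A)) w -> `|w| <= 1) ->
  root (map_poly intr (char_poly A)) z -> z != 0 ->
  exists2 m, (0 < m)%N & z ^+ m = 1.
Proof.
case: n A => [|n] A hdisc rz zn0.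
  by move: rz; rewrite map_char_poly /char_poly det_mx00 (negbTE (root1 _)).
pose Ac := map_mx (intr : int -> algC) A.
have mapX k : map_mx (intr : int -> algC) (A ^+ k) = Ac ^+ k.
  by rewrite rmorphXn.
have rootE' w : root (map_poly intr (char_poly A)) w = eigenvalue Ac w.
  by rewrite map_char_poly eigenvalue_root_char.
pose B k := char_poly (A ^+ k.+1).
have rootB k (w : algC) : root (map_poly intr (B k)) w = eigenvalue (Ac ^+ k.+1) w.
  by rewrite map_char_poly mapX eigenvalue_root_char.
have zB k : root (map_poly intr (B k)) (z ^+ k.+1).
  rewrite rootB; move: rz; rewrite rootE' => /eigenvalueP [v vA vn0].
  by apply/eigenvalueP; exists v => //; exact: eig_powP.
have discB k (w : algC) : root (map_poly intr (B k)) w -> `|w| <= 1.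
  rewrite rootB => /(eig_pow_inv (ltn0Sn k)) [u uA <-].
  by rewrite normrX; apply: exprn_ile1 => //; apply: hdisc; rewrite rootE'.
have sizeB k : size (B k) = n.+2 by rewrite size_char_poly.
have coefB k i : `|(B k)`_i| <= (2 ^ n.+1)%N%:Z.
  have [r Dr] := closed_field_poly_normal (map_poly intr (B k) : {poly algC}).
  have mon : map_poly (intr : int -> algC) (B k) \is monic.
    by rewrite map_char_poly char_poly_monic.
  rewrite (monicP mon) scale1r in Dr.
  have sr : size r = n.+1.
    have := size_prod_XsubC r id; rewrite -Dr.
    by rewrite size_map_inj_poly ?sizeB //; [case | exact: intr_inj].
  have hr u : u \in r -> `|u| <= 1.
    by move=> ur; apply: (discB k); rewrite Dr root_prod_XsubC.
  have := coef_prod_bound hr i; rewrite -Dr coef_map /= sr.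
  rewrite -intr_norm -natrX => h; rewrite -(ler_int algC); exact: h.
pose C := (2 ^ n.+1)%N.
pose T := {ffun 'I_n.+2 -> 'I_(C.*2).+1}.
pose pf (f : T) : {poly int} := \poly_(i < n.+2) ((f (inord i) : nat)%:Z - C%:Z).
pose R := \prod_(f : T | pf f != 0) map_poly (intr : int -> algC) (pf f).
have Rn0 : R != 0.
  apply/prodf_neq0 => f fn0.
  by rewrite -size_poly_eq0 size_map_inj_poly ?size_poly_eq0 //; exact: intr_inj.
have BinR k : root R (z ^+ k.+1).
  pose f : T := [ffun i : 'I_n.+2 => inord (absz ((B k)`_(i : nat) + C%:Z))].
  have pfB : pf f = B k.
    apply/polyP => i; rewrite coef_poly; case: ltnP => hi.
      rewrite ffunE (inordK hi).
      have := coefB k i; rewrite -/C ler_norml => /andP[h1 h2].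
      rewrite inordK ?(-addnn); clearbody C; move: h1 h2; set c := (B k)`_i; clear; move=> h1 h2; lia.
    by rewrite nth_default ?sizeB.
  have : pf f != 0 by rewrite pfB monic_neq0 // char_poly_monic.
  move=> fn0; rewrite /R (bigD1 f) //= rootM pfB zB //.
have nu : ~~ uniq [seq z ^+ k.+1 | k <- iota 0 (size R)].
  apply/negP => u.
  have hall : all (root R) [seq z ^+ k.+1 | k <- iota 0 (size R)].
    by apply/allP => x /mapP [k _ ->]; exact: BinR.
  by have := max_poly_roots Rn0 hall u; rewrite size_map size_iota ltnn.
have [i [j [ij jR]]] := uniqPn 0 nu.
rewrite size_map size_iota in jR.
rewrite (nth_map 0%N) ?size_iota ?(ltn_trans ij) // (nth_map 0%N) ?size_iota //.
rewrite !nth_iota ?(ltn_trans ij) // !add0n => e.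
exists (j - i)%N; first by rewrite subn_gt0.
apply: (mulfI (expf_neq0 i.+1 zn0)); rewrite -exprD mulr1 e.
by rewrite addSn subnKC // ltnW.
Qed.

Lemma kron_poly (p : {poly int}) : p \is monic ->
  (forall w : algC, root (map_poly intr p) w -> `|w| <= 1) ->
  forall z : algC, root (map_poly intr p) z -> z != 0 ->
  exists2 m, (0 < m)%N & z ^+ m = 1.
Proof. by move=> mp hd z; rewrite -(companionmxK mp) in hd *; exact: kron_mx. Qed.

Definition good (p : {poly int}) := exists (a b : seq nat) (s : nat),
  [/\ all (fun j => 0 < j)%N a, all (fun j => 0 < j)%N b &
      p * \prod_(j <- a) (1 - 'X^j) = (-1) ^+ s * \prod_(j <- b) (1 - 'X^j)].

Lemma good1 : good 1.
Proof. by exists [::], [::], 0%N; split => //; rewrite !big_nil expr0 !mulr1. Qed.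

Lemma goodM p q : good p -> good q -> good (p * q).
Proof.
move=> [a1 [b1 [s1 [ha1 hb1 e1]]]] [a2 [b2 [s2 [ha2 hb2 e2]]]].
exists (a1 ++ a2), (b1 ++ b2), (s1 + s2)%N; rewrite !all_cat ha1 ha2 hb1 hb2.
split => //; rewrite !big_cat exprD /=.
transitivity ((p * \prod_(j <- a1) (1 - 'X^j)) * (q * \prod_(j <- a2) (1 - 'X^j))).
  by ring.
by rewrite e1 e2; ring.
Qed.

Lemma good_div p q : good (p * q) -> good q -> good p.
Proof.
move=> [a1 [b1 [s1 [ha1 hb1 e1]]]] [a2 [b2 [s2 [ha2 hb2 e2]]]].
exists (b2 ++ a1), (b1 ++ a2), (s1 + s2)%N; rewrite !all_cat ha1 ha2 hb1 hb2.
split => //; rewrite !big_cat exprD /=.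
set A1 := \prod_(j <- a1) _ in e1 *; set A2 := \prod_(j <- a2) _ in e2 *.
set B1 := \prod_(j <- b1) _ in e1 *; set B2 := \prod_(j <- b2) _ in e2 *.
have e22 : ((-1) ^+ s2 * (-1) ^+ s2 : {poly int}) = 1.
  by rewrite -exprMn mulrNN mulr1 expr1n.
transitivity ((-1) ^+ s2 * (-1) ^+ s2 * (p * (B2 * A1))).
  by rewrite e22 mul1r.
transitivity ((-1) ^+ s2 * (p * ((-1) ^+ s2 * B2) * A1)); first by ring.
rewrite -e2.
transitivity ((-1) ^+ s2 * (A2 * (p * q * A1))); first by ring.
by rewrite e1; ring.
Qed.

Lemma good_prod (I : Type) (r : seq I) (P : pred I) (F : I -> {poly int}) :
  (forall i, P i -> good (F i)) -> good (\prod_(i <- r | P i) F i).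
Proof.
move=> h; elim: r => [|x r IH]; first by rewrite big_nil; exact: good1.
rewrite big_cons; case: ifP => Px //; exact: goodM (h _ Px) IH.
Qed.

Lemma good_Xn1 n : (0 < n)%N -> good ('X^n - 1).
Proof.
move=> n0; exists [::], [:: n], 1%N; rewrite /= n0 big_nil big_seq1 mulr1.
by split => //; rewrite expr1 mulN1r opprB.
Qed.

Lemma good_Phi n : (0 < n)%N -> good 'Phi_n.
Proof.
elim/ltn_ind: n => n IH n0.
have := prod_Cyclotomic n0.
rewrite (bigD1_seq n) ?divisors_uniq -?dvdn_divisors // => e.
apply: (@good_div _ (\prod_(i <- divisors n | i != n) 'Phi_i)).
  by rewrite e; exact: good_Xn1.
rewrite big_seq_cond; apply: good_prod => d /andP[].
rewrite -dvdn_divisors // => dn dnn; apply: IH; last exact: dvdn_gt0 n0 dn.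
by rewrite ltn_neqAle dnn dvdn_leq.
Qed.

Lemma Phi_dvd (p : {poly int}) k (z : algC) :
  k.-primitive_root z -> root (map_poly intr p) z -> p %% 'Phi_k = 0.
Proof.
move=> pz rp.
have monP := Cyclotomic_monic k.
have Dp := Pdiv.IdomainMonic.divp_eq monP p.
set r := p %% 'Phi_k in Dp *.
have Er : r = p - p %/ 'Phi_k * 'Phi_k.
  by apply/eqP; rewrite eq_sym subr_eq addrC -Dp.
have Phiz : (map_poly (intr : int -> algC) 'Phi_k).[z] = 0.
  by apply/rootP; rewrite (Cintr_Cyclotomic pz) root_cyclotomic.
have rz : root (map_poly (intr : int -> algC) r) z.
  move: rp; rewrite Er rmorphB rmorphM /= !rootE hornerD hornerN hornerM Phiz.
  by rewrite mulr0 subr0.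
have [pf [Dpf mpf] dvpf] := minCpolyP z.
have spf : size pf = size 'Phi_k.
  rewrite -(size_map_inj_poly (fmorph_inj (@ratr algC)) (rmorph0 _) pf) -Dpf.
  rewrite (minCpoly_cyclotomic pz) -(Cintr_Cyclotomic pz).
  by rewrite size_map_inj_poly //; exact: intr_inj.
pose rq := map_poly (intr : int -> rat) r.
have Erq : map_poly ratr rq = map_poly (intr : int -> algC) r.
  rewrite -map_poly_comp; apply: eq_map_poly => x /=; exact: rmorph_int.
have dv : pf %| rq by rewrite -dvpf Erq.
have [//|rn0] := eqVneq r 0.
have rqn0 : rq != 0.
  by rewrite -size_poly_eq0 size_map_inj_poly ?size_poly_eq0 //; exact: intr_inj.
have := dvdp_leq rqn0 dv; rewrite spf size_map_inj_poly //; last exact: intr_inj.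
by rewrite leqNgt ltn_modpN0 // monic_neq0.
Qed.

Lemma good_monic (p : {poly int}) : p \is monic ->
  (forall z : algC, root (map_poly intr p) z -> exists2 m, (0 < m)%N & z ^+ m = 1) ->
  good p.
Proof.
have [m] := ubnP (size p); elim: m p => // m IH p sp mp hr.
have [sp1|sp2] := leqP (size p) 1.
  have Dp := size1_polyC sp1.
  have e : p`_0 = 1 by move: (monicP mp); rewrite {1}Dp lead_coefC.
  by rewrite Dp e; exact: good1.
have [z rz] : exists z : algC, root (map_poly intr p) z.
  apply/(closed_rootP (map_poly (intr : int -> algC) p)).
  rewrite size_map_inj_poly ?gtn_eqF //; exact: intr_inj.
have [k1 k10 zk1] := hr z rz.
have [k pz _] := prim_order_exists k10 zk1.
have k0 := prim_order_gt0 pz.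
have Dp := Pdiv.IdomainMonic.divp_eq (Cyclotomic_monic k) p.
rewrite (Phi_dvd pz rz) addr0 in Dp.
set q := p %/ 'Phi_k in Dp.
have mq : q \is monic by rewrite -(monicMr q (Cyclotomic_monic k)) -Dp.
rewrite Dp; apply: goodM; last exact: good_Phi.
apply: IH => //.
  have := size_Mmonic (monic_neq0 mq) (Cyclotomic_monic k).
  rewrite -Dp size_Cyclotomic => e.
  have := totient_gt0 k; rewrite k0 => t0.
  move: t0 sp; rewrite e addnS /=; move: (totient k) (size q) => t s; lia.
by move=> w rw; apply: hr; rewrite Dp rmorphM rootM rw.
Qed.
Unset Implicit Arguments.

Lemma prod0 (l : seq nat) : all (fun j => 0 < j)%N l ->
  (\prod_(j <- l) (1 - 'X^j) : {poly int}).[0] = 1.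
Proof.
move=> hl; rewrite horner_prod big_seq big1 // => j jl.
have := allP hl j jl; rewrite /= => j0.
by rewrite !hornerE expr0n eqn0Ngt j0 subr0.
Qed.

Theorem lemma9 (S : pred nat) :
  numerical_semigroup S ->
  ((exists e : nat -> int, cyclotomic_exponent_seq S e /\
      exists M : nat, forall j, (M < j)%N -> e j = 0)
   <-> cyclotomic_semigroup S).
Proof.
case=> S0 Sadd [N0 hN0]; split.
  case=> e [ce [M hM]] N gb z rz.
  have E := fwd gb ce hM.
  have : root (map_poly (intr : int -> algC)
                 (\prod_(1 <= j < M.+1) (1 - 'X^j) ^+ posf (e j))) z.
    by rewrite -E rmorphM rootM rz.
  rewrite rmorph_prod /= rootE horner_prod prodf_seq_eq0 => /hasP [j jr /andP[_]].
  rewrite rmorphXn rmorphB /= rmorph1 map_polyXn !hornerE expf_eq0 subr_eq0.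
  case/andP => _ /eqP h.
  move: jr; rewrite mem_index_iota => /andP[j0 _].
  have : `|z| ^+ j == 1 by rewrite -normrX -h normr1.
  by rewrite pexpr_eq1 // => /eqP ->.
move=> hc.
pose P0 N := all S (iota N (N0 - N)).
have exP : exists N, P0 N by exists N0; rewrite /P0 subnn.
case: (ex_minnP exP) => c Pc minc.
have cN0 : (c <= N0)%N by apply: minc; rewrite /P0 subnn.
have gbc : gap_bound S c.
  move=> k ck; case: (ltnP k N0) => kN0; last exact: hN0.
  by apply: (allP Pc); rewrite mem_iota ck subnKC.
have notSc : (0 < c)%N -> ~~ S c.-1.
  move=> c0; apply/negP => Sc1.
  have : P0 c.-1.
    apply/allP => k; rewrite mem_iota => /andP[k1 _].
    have [->|kc] := eqVneq k c.-1; first exact: Sc1.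
    by apply: gbc; move: k1 kc; case: (c) c0 => // c' _ /=; lia.
  by move/minc; case: (c) c0 => // c'; rewrite ltnn.
set P := semigroup_poly S c.
have cP i : P`_i = semigroup_coef S i by exact: sp_coef.
have Pc1 : P`_c = 1.
  rewrite cP /semigroup_coef gbc //.
  by case: (c) notSc => [|c'] //= h; rewrite (negbTE (h isT)).
have Pz i : (c < i)%N -> P`_i = 0.
  move=> ci; rewrite cP /semigroup_coef gbc ?(ltnW ci) //.
  rewrite (gbc i.-1); last by move: ci; case: (i) => // i' /=; lia.
  by case: (i) ci.
have sP : size P = c.+1.
  apply/eqP; rewrite eqn_leq; apply/andP; split.
    by apply/leq_sizeP => j; exact: Pz.
  case: (leqP c.+1 (size P)) => // h.
  by move: Pc1; rewrite nth_default // => /eqP; rewrite eq_sym oner_eq0.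
have mP : P \is monic by rewrite monicE /lead_coef sP /= Pc1.
have P0_1 : P`_0 = 1 by rewrite cP /semigroup_coef S0.
have hroots : forall z : algC, root (map_poly intr P) z -> exists2 m, (0 < m)%N & z ^+ m = 1.
  move=> z rz; apply: (kron_poly mP (hc c gbc) rz).
  apply/negP => /eqP z0; move: rz; rewrite z0 rootE horner_coef0 coef_map P0_1 /=.
  by rewrite oner_eq0.
have [a [b [s [ha hb E]]]] := good_monic mP hroots.
have e0 := congr1 (fun p => p.[0]) E; rewrite /= !hornerM !prod0 // in e0.
rewrite -signr_odd in E e0; case: (odd s) E e0 => /= E e0.
  move: e0; rewrite horner_coef0 P0_1 !mulr1 expr1 !hornerE => h.
  have : (1 : int) != -1 by [].
  by move=> /eqP; case; exact: h.
rewrite expr0 mul1r in E.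
exists (fun j => (count_mem j b)%:Z - (count_mem j a)%:Z); split.
  exact: bwd gbc ha hb E.
exists (\max_(j <- a ++ b) j)%N => j jM.
have nin l : {subset l <= a ++ b} -> count_mem j l = 0%N.
  move=> sub; apply/count_memPn; apply/negP => /sub jl.
  by have := @leq_bigmax_seq _ (a ++ b) xpredT (fun i => i) j jl isT; rewrite leqNgt jM.
rewrite !nin // => x xl; rewrite mem_cat xl ?orbT //.
Qed.
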